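(* For every integer $m\geq 1$, the graph $\mathcal{G}^1_{6m+1}$ is transmission irregular.
   Context: Let $G_1$ be the graph with vertices $a,b,c,d,e$ and edges $ab,ac,ad,bc,cd,de$. For an integer $n\ge 2$, $\mathcal{G}^1_n$ is obtained from $G_1$ by adding a new path from $a$ to $b$ with $n$ new internal vertices (i.e. a path $a,x_1,\dots,x_n,b$ of length $n+1$, where the $x_i$ are new vertices). The transmission of a vertex $u$ in a connected graph $G$ is $Tr_G(u)=\sum_{v}d_G(u,v)$; a graph is transmission irregular if no two of its vertices have equal transmission. *)

(* Defs.v *)
From mathcomp Require Import all_boot.
Set Implicit Arguments. Unset Strict Implicit. Unset Printing Implicit Defensive.

(* A simple graph is given by a symmetric irreflexive relation e on a finType. *)

Fixpoint walk (T : finType) (e : rel T) (k : nat) (u v : T) : bool :=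
  if k is k'.+1 then [exists w, e u w && walk e k' w v] else u == v.

(* Graph distance: the least k such that a walk of length k from u to v exists
   (a shortest walk is a shortest path).  In a connected graph such a k is < #|T|;
   for unreachable pairs the value #|T| is returned (irrelevant here). *)
Definition dist (T : finType) (e : rel T) (u v : T) : nat :=
  find (fun k => walk e k u v) (iota 0 #|T|).

Definition transmission (T : finType) (e : rel T) (u : T) : nat :=
  \sum_(v : T) dist e u v.

Definition transmission_irregular (T : finType) (e : rel T) : Prop :=
  forall u v : T, transmission e u = transmission e v -> u = v.

(* The graph G^1_n on vertex set 'I_(n+5):
   0 = a, 1 = b, 2 = c, 3 = d, 4 = e, and 4+i = x_i for 1 <= i <= n.
   Edges: ab, ac, ad, bc, cd, de, and the path a, x_1, ..., x_n, b. *)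
Definition G1_edge (n i j : nat) : bool :=
  [|| (i == 0) && (j == 1), (i == 0) && (j == 2), (i == 0) && (j == 3),
      (i == 1) && (j == 2), (i == 2) && (j == 3), (i == 3) && (j == 4),
      (i == 0) && (j == 5),
      [&& 5 <= i, i < n + 4 & j == i.+1]
    | (i == n + 4) && (j == 1)].

Definition G1 (n : nat) : rel 'I_(n + 5) :=
  fun i j => G1_edge n i j || G1_edge n j i.

(* Main.v *)
Require Import Defs.
From mathcomp Require Import all_boot zify.

Section General.
Variables (T : finType) (e : rel T) (D : T -> T -> nat).
Hypothesis H0 : forall u, D u u = 0.
Hypothesis Hpos : forall u v, D u v = 0 -> u = v.
Hypothesis Hlip : forall u w v, e u w -> D u v <= (D w v).+1.
Hypothesis Hdesc : forall u v, 0 < D u v -> exists w, e u w && ((D w v).+1 == D u v).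
Hypothesis Hbound : forall u v, D u v < #|T|.

Lemma walk_le k u v : walk e k u v -> D u v <= k.
Proof.
elim: k u => [|k IH] u /=; first by move/eqP->; rewrite H0.
case/existsP=> w /andP[euw /IH Hw].
have := @Hlip u w v euw; lia.
Qed.

Lemma walk_D d u v : D u v = d -> walk e d u v.
Proof.
elim: d u => [|d IH] u /= Huv; first by rewrite (Hpos _ _ Huv).
have [w /andP[euw /eqP Hw]] : exists w, e u w && ((D w v).+1 == D u v).
  by apply: Hdesc; rewrite Huv.
apply/existsP; exists w; rewrite euw /=; apply: IH; rewrite Huv in Hw; lia.
Qed.

Lemma dist_eq u v : dist e u v = D u v.
Proof.
rewrite /dist.
have Hb := Hbound u v.
rewrite -(subnKC (ltnW Hb)) iotaD find_cat.
have -> : has (fun k => walk e k u v) (iota 0 (D u v)) = false.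
  apply/hasP=> [[k]]; rewrite mem_iota add0n => /andP[_ Hk] /walk_le; lia.
rewrite size_iota add0n.
case E: (#|T| - D u v) => [|r]; first by exfalso; lia.
by rewrite /= walk_D // addn0.
Qed.
End General.

Definition cd (n p q : nat) := minn (p - q + (q - p)) (n.+2 - (p - q + (q - p))).
Definition dC (n p : nat) := minn p (n.+1 - p).
Definition Dcyc (n p j : nat) : nat :=
  match j with 0 => cd n p 0 | 1 => cd n p n.+1 | 2 => (dC n p).+1
  | 3 => (cd n p 0).+1 | 4 => (cd n p 0).+2 | jj.+1.+4 => cd n p jj.+1 end.
Definition pos (n i : nat) := match i with 0 => 0 | 1 => n.+1 | ii.+1.+4 => ii.+1 | _ => 0 end.
Definition Dn (n i j : nat) : nat :=
  match i with
  | 2 => match j with 2 => 0 | 3 => 1 | 4 => 2 | _ => (dC n (pos n j)).+1 end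
  | 3 => match j with 2 => 1 | 3 => 0 | 4 => 1 | _ => (cd n (pos n j) 0).+1 end
  | 4 => match j with 2 => 2 | 3 => 1 | 4 => 0 | _ => (cd n (pos n j) 0).+2 end
  | _ => Dcyc n (pos n i) j end.

Ltac vcase x := move: x; case=> [|[|[|[|[|x]]]]].

Lemma Dn_lip n u w v : 0 < n -> u < n + 5 -> w < n + 5 -> v < n + 5 ->
  G1_edge n u w || G1_edge n w u -> Dn n u v <= (Dn n w v).+1.
Proof.
move=> Hn Hu Hw Hv He; move: Hu Hw Hv He.
vcase u; vcase w; rewrite /G1_edge /=; vcase v; move=> Hu Hw Hv He;
  rewrite /Dn /Dcyc /pos /cd /dC /=; lia.
Qed.

Lemma ex_of_has n (B : nat -> bool) s :
  has (fun w => (w < n + 5) && B w) s -> exists2 w, w < n + 5 & B w.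
Proof. by case/hasP=> w _ /andP[]; exists w. Qed.

Ltac fin := match goal with H : is_true (0 < _) |- _ => move: H end; rewrite /G1_edge /Dn /Dcyc /pos /cd /dC /=; lia.

Lemma Dn_desc n u v : 0 < n -> u < n + 5 -> v < n + 5 -> 0 < Dn n u v ->
  exists2 w, w < n + 5 & (G1_edge n u w || G1_edge n w u) && ((Dn n w v).+1 == Dn n u v).
Proof.
case: n => [//|n] _; move=> Hu Hv; move: Hu Hv.
vcase u.
- move=> _ Hv H; apply: (@ex_of_has _ _ [:: 1; 2; 3; 0.+1.+4]); move: Hv H; vcase v => Hv H; fin.
- move=> _ Hv H; apply: (@ex_of_has _ _ [:: 0; 2; n.+1.+4]); move: Hv H; vcase v => Hv H; fin.
- move=> _ Hv H; apply: (@ex_of_has _ _ [:: 0; 1; 3]); move: Hv H; vcase v => Hv H; fin.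
- move=> _ Hv H; apply: (@ex_of_has _ _ [:: 0; 2; 4]); move: Hv H; vcase v => Hv H; fin.
- move=> _ Hv H; apply: (@ex_of_has _ _ [:: 3]); move: Hv H; vcase v => Hv H; fin.
- move=> Hu Hv H.
  case: (boolP (u.+1 == n.+1)) => Hun.
  + case: u Hu Hv H Hun => [|u] Hu Hv H Hun.
    * apply: (@ex_of_has _ _ [:: 0; 1]); move: Hv H; vcase v => Hv H; fin.
    * apply: (@ex_of_has _ _ [:: u.+1.+4; 1]); move: Hv H; vcase v => Hv H; fin.
  + case: u Hu Hv H Hun => [|u] Hu Hv H Hun.
    * apply: (@ex_of_has _ _ [:: 0; 1.+1.+4]); move: Hv H; vcase v => Hv H; fin.
    * apply: (@ex_of_has _ _ [:: u.+1.+4; u.+2.+1.+4]); move: Hv H; vcase v => Hv H; fin.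
Qed.

Lemma Dn_zero n u v : u < n + 5 -> v < n + 5 -> Dn n u v = 0 -> u = v.
Proof. vcase u; vcase v; move=> Hu Hv; rewrite /Dn /Dcyc /pos /cd /dC /=; lia. Qed.

Lemma Dn_refl n u : u < n + 5 -> Dn n u u = 0.
Proof. vcase u; move=> Hu; rewrite /Dn /Dcyc /pos /cd /dC /=; lia. Qed.

Lemma Dn_bound n u v : u < n + 5 -> v < n + 5 -> Dn n u v < n + 5.
Proof. vcase u; vcase v; move=> Hu Hv; rewrite /Dn /Dcyc /pos /cd /dC /=; lia. Qed.

Lemma dist_G1 n (u v : 'I_(n + 5)) : 0 < n -> dist (@G1 n) u v = Dn n u v.
Proof.
move=> Hn.
apply: (@dist_eq _ _ (fun u v : 'I_(n + 5) => Dn n u v)).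
- by move=> w; apply: Dn_refl.
- by move=> x y /Dn_zero H; apply: val_inj; apply: H.
- by move=> x y z; apply: Dn_lip.
- move=> x y H; have [w Hw /andP[He Hd]] := Dn_desc n x y Hn (ltn_ord x) (ltn_ord y) H.
  by exists (Ordinal Hw); rewrite /G1 He.
- by move=> x y; rewrite card_ord; apply: Dn_bound.
Qed.

Lemma sum_split n (F : nat -> nat) :
  \sum_(i < n + 5) F i = F 0 + F 1 + F 2 + F 3 + F 4 + \sum_(j < n) F j.+1.+4.
Proof.
rewrite (_ : n + 5 = n.+1.+4); last by rewrite addnC.
by rewrite !big_ord_recl /= !addnA.
Qed.

Lemma sum_cyc n (G : nat -> nat) :
  \sum_(q < n.+2) G q = G 0 + G n.+1 + \sum_(j < n) G j.+1.
Proof. by rewrite big_ord_recl big_ord_recr /= addnAC addnA. Qed.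

Lemma cdC n p q : cd n p q = cd n q p.
Proof. by rewrite /cd addnC. Qed.

Lemma rot n p : p <= n.+1 -> \sum_(q < n.+2) cd n p q = \sum_(q < n.+2) cd n 0 q.
Proof.
elim: p => [//|p IH] Hp.
rewrite -IH; last lia.
rewrite big_ord_recl [in RHS]big_ord_recr /=.
rewrite addnC; congr (_ + _).
rewrite /cd; lia.
Qed.

Lemma sum_addc N (f : nat -> nat) c : \sum_(q < N) (f q + c) = \sum_(q < N) f q + N * c.
Proof. by rewrite big_split /= sum_nat_const card_ord. Qed.

Definition TrN n u := \sum_(v < n + 5) Dn n u v.
Definition Ssum n := \sum_(q < n.+2) cd n 0 q.
Definition Tsum n := \sum_(q < n.+2) dC n q.

Lemma TrN_cyc n u p : p <= n.+1 -> (forall v, Dn n u v = Dcyc n p v) ->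
  TrN n u = Ssum n + dC n p + (cd n p 0).*2 + 4.
Proof.
move=> Hp HD; rewrite /TrN sum_split.
under eq_bigr => j _ do rewrite HD.
rewrite !HD /Ssum -(@rot n p Hp) (sum_cyc n (cd n p)) /=.
lia.
Qed.

Lemma TrN_c n : TrN n 2 = Tsum n + n + 5.
Proof.
have E : \sum_(q < n.+2) (dC n q + 1) = Tsum n + n.+2 by rewrite sum_addc muln1.
rewrite (sum_cyc n (fun q => dC n q + 1)) /= in E.
rewrite /TrN sum_split /=.
under eq_bigr => j _ do rewrite -addn1.
lia.
Qed.

Lemma sum_cd0 n : \sum_(q < n.+2) (cd n q 0 + 1) = Ssum n + n.+2.
Proof.
rewrite (sum_addc _ (fun q => cd n q 0)) muln1 /Ssum; congr (_ + _).
by apply: eq_bigr => q _; rewrite cdC.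
Qed.

Lemma TrN_d n : TrN n 3 = Ssum n + n + 4.
Proof.
have E := sum_cd0 n.
rewrite (sum_cyc n (fun q => cd n q 0 + 1)) /= in E.
rewrite /TrN sum_split /=.
under eq_bigr => j _ do rewrite -addn1.
lia.
Qed.

Lemma TrN_e n : TrN n 4 = Ssum n + n + n + 7.
Proof.
have E := sum_cd0 n.
rewrite (sum_cyc n (fun q => cd n q 0 + 1)) /= in E.
rewrite /TrN sum_split /=.
under eq_bigr => j _ do rewrite -addn2.
rewrite (sum_addc n (fun j => cd n j.+1 0)).
rewrite (sum_addc n (fun j => cd n j.+1 0)) in E.
lia.
Qed.

Lemma ST n k : n.+1 = k.*2 -> Ssum n = Tsum n + k.
Proof.
move=> Hk.
rewrite /Ssum (eq_bigr (fun q : 'I_n.+2 => dC n q + (k < q))); last first.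
  by move=> q _; rewrite cdC /cd /dC; have := ltn_ord q; lia.
rewrite big_split /=; congr (_ + _).
rewrite -(big_mkord xpredT (fun q => nat_of_bool (k < q))).
rewrite (@big_cat_nat _ _ _ k.+1) //=; last lia.
rewrite (@eq_big_nat _ _ _ 0 k.+1 _ (fun _ => 0)); last by move=> i; lia.
rewrite (@eq_big_nat _ _ _ k.+1 n.+2 _ (fun _ => 1)); last by move=> i; lia.
rewrite !sum_nat_const_nat; lia.
Qed.

Definition TrF n u := match u with
  | 2 => Tsum n + n + 5 | 3 => Ssum n + n + 4 | 4 => Ssum n + n + n + 7
  | _ => Ssum n + dC n (pos n u) + (cd n (pos n u) 0).*2 + 4 end.

Lemma TrN_all n u : u < n + 5 -> TrN n u = TrF n u.
Proof.
vcase u; move=> Hu.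
- by rewrite (@TrN_cyc n 0 0).
- by rewrite (@TrN_cyc n 1 n.+1).
- exact: TrN_c.
- exact: TrN_d.
- exact: TrN_e.
- rewrite (@TrN_cyc n u.+1.+4 u.+1) //; lia.
Qed.

Lemma main_nat m u v : 1 <= m -> u < 6 * m + 1 + 5 -> v < 6 * m + 1 + 5 ->
  TrN (6 * m + 1) u = TrN (6 * m + 1) v -> u = v.
Proof.
move=> Hm Hu Hv; rewrite (@TrN_all _ u Hu) (@TrN_all _ v Hv).
have HST := @ST (6 * m + 1) (3 * m + 1) ltac:(lia).
move: Hu Hv; vcase u; vcase v => Hu Hv; rewrite /TrF /pos /dC /cd /=; lia.
Qed.

Theorem proposition1 : forall m : nat, 1 <= m ->
  transmission_irregular (@G1 (6 * m + 1)).
Proof.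
move=> m Hm u v.
have E : forall w : 'I_(6 * m + 1 + 5), transmission (@G1 (6 * m + 1)) w = TrN (6 * m + 1) w.
  move=> w; rewrite /transmission /TrN; apply: eq_bigr => x _.
  by rewrite dist_G1 //; lia.
rewrite !E => H; apply: val_inj.
exact: (@main_nat m u v Hm (ltn_ord u) (ltn_ord v) H).
Qed.
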